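(* Let $(a,b,c)$ be a cyclic triple, assume (AW), that $(A^a,A^b)$ is a Leonard pair as in the context, and that $(A^b,A^c)$ is also a Leonard pair with eigenvalue orderings $\theta^b_0,\dots,\theta^b_{2s}$ and $\theta^c_0,\dots,\theta^c_{2s}$. Let $\{|\theta^b_M\rangle\}$ be the eigenbasis of $A^b$ attached to the pair $(A^a,A^b)$. Then for $0\le M\le 2s$, $$A^c|\theta^b_M\rangle=A^{(c,b)}_{M+1,M}\,\mathfrak g(M)\,|\theta^b_{M+1}\rangle+A^{(c,b)}_{M,M}|\theta^b_M\rangle+A^{(c,b)}_{M-1,M}\,\mathfrak g(M-1)^{-1}|\theta^b_{M-1}\rangle,$$ where $\mathfrak g(k)=q^{4k}\dfrac{\mathsf b^b}{\mathsf c^b}\cdot\dfrac{\mathsf c^bq^{-2k}+r_0q\,\mathsf c^a\mathsf b^c}{\mathsf b^bq^{2k}+r_0q^{-1}\mathsf c^a\mathsf b^c}$ (the last term is absent for $M=0$).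
   Context: $q\in\mathbb C^*$ is not a root of unity, $s\in\{0,\tfrac12,1,\dots\}$, $\mathcal V$ a complex vector space of dimension $2s+1$ with identity $\mathbb I$; $[X,Y]_q=qXY-q^{-1}YX$. Labels range over $\{\cdot,*,\diamond\}$; $A^{\cdot}=A$, $\mathsf b^\cdot=\mathsf b$, $\mathsf c^\cdot=\mathsf c$. Fix nonzero $r_0,\mathsf b^a,\mathsf c^a$ with $r_0^{-2}=\mathsf b\mathsf c=\mathsf b^*\mathsf c^*=\mathsf b^\diamond\mathsf c^\diamond$; $\theta^a_M=\mathsf b^aq^{2M}+\mathsf c^aq^{-2M}$; for distinct $a,b,c$, $\omega^{\{a,b,c\}}=-(q-q^{-1})^2(\theta^a_s\theta^b_s-r_0^{-1}(q^{2s+1}+q^{-2s-1})\theta^c_s)$. For $A,A^*\in\mathrm{End}(\mathcal V)$ set $A^\diamond=\frac{r_0}{q^2-q^{-2}}[A^*,A]_q+\frac{r_0\omega^{\{\cdot,*,\diamond\}}}{(q-q^{-1})(q^2-q^{-2})}\mathbb I$. Hypothesis (AW): for every ordered pair $(a,b)$ of distinct labels, $c$ the remaining one, $[A^a,[A^a,A^b]_q]_{q^{-1}}=-\frac{(q^2-q^{-2})^2}{r_0^2}A^b+\omega^{\{a,b,c\}}A^a+\frac{q+q^{-1}}{r_0}\omega^{\{a,c,b\}}\mathbb I$. A Leonard pair on $\mathcal V$ is a pair of diagonalizable operators such that each has an eigenbasis in which the other is represented by an irreducible tridiagonal matrix. A cyclic triple is one of $(\cdot,*,\diamond),( *,\diamond,\cdot),(\diamond,\cdot,*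 )$. Coefficients: for a cyclic triple $(a,b,c)$, $A^{(b,a)}_{M,M-1}=q^{2-4s}\frac{(1-q^{2M})(\mathsf c^a-\mathsf b^aq^{2M+4s})(\mathsf b^b\mathsf b^cr_0q^{4s-1}+\mathsf b^aq^{2M-2})(\mathsf c^a\mathsf c^cr_0q^{-1}+\mathsf c^bq^{2M-2})}{(\mathsf c^a-\mathsf b^aq^{4M-2})(\mathsf c^a-\mathsf b^aq^{4M})}$, $A^{(b,a)}_{M-1,M}=\frac{(1-q^{2M-4s-2})(\mathsf c^a-\mathsf b^aq^{2M-2})(\mathsf c^a+\mathsf b^b\mathsf b^cr_0q^{2M+4s-1})(\mathsf c^b+\mathsf b^a\mathsf c^cr_0q^{2M-1})}{(\mathsf c^a-\mathsf b^aq^{4M-4})(\mathsf c^a-\mathsf b^aq^{4M-2})}$, $A^{(b,a)}_{M,M}=\theta^b_0-A^{(b,a)}_{M,M+1}-A^{(b,a)}_{M,M-1}$; coefficients with indices outside $\{0,\dots,2s\}$ are $0$. $A^{(a,b)}_{M,N}$ is the image of $A^{(b,a)}_{M,N}$ under $\mathsf b^a\leftrightarrow\mathsf b^b$, $\mathsf c^a\leftrightarrow\mathsf c^b$, $\mathsf b^c\mapsto q^{-4s}\mathsf c^c$, $\mathsf c^c\mapsto q^{4s}\mathsf b^c$. This defines $A^{(x,y)}$ for all six ordered pairs of distinct labels (in particular $A^{(c,b)}$ is obtained from the cyclic triple $(b,c,a)$). Bases attached to a Leonard pair: for cyclic $(a,b,c)$ with $(A^a,A^b)$ a Leonard pair (eigenvalue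 orderings $\theta^a_M,\theta^b_M$), there are bases $\{|\theta^a_M\rangle\}$, $\{|\theta^b_M\rangle\}$ with $A^a|\theta^a_M\rangle=\theta^a_M|\theta^a_M\rangle$, $A^b|\theta^a_M\rangle=A^{(b,a)}_{M+1,M}|\theta^a_{M+1}\rangle+A^{(b,a)}_{M,M}|\theta^a_M\rangle+A^{(b,a)}_{M-1,M}|\theta^a_{M-1}\rangle$, $A^b|\theta^b_M\rangle=\theta^b_M|\theta^b_M\rangle$, $A^a|\theta^b_M\rangle=A^{(a,b)}_{M+1,M}|\theta^b_{M+1}\rangle+A^{(a,b)}_{M,M}|\theta^b_M\rangle+A^{(a,b)}_{M-1,M}|\theta^b_{M-1}\rangle$; these are the bases ''attached to the pair $(A^a,A^b)$''. *)

(* Defs.v *)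
From HB Require Import structures.
From mathcomp Require Import all_boot all_order all_algebra.
From mathcomp Require Import reals.
From mathcomp Require Export complex.
Set Implicit Arguments. Unset Strict Implicit. Unset Printing Implicit Defensive.
Import Order.TTheory GRing.Theory Num.Theory.
Local Open Scope ring_scope.

Inductive label := Ldot | Lstar | Ldia.

Definition cyclic (a b c : label) : Prop :=
  [/\ a = Ldot, b = Lstar & c = Ldia] \/
  [/\ a = Lstar, b = Ldia & c = Ldot] \/
  [/\ a = Ldia, b = Ldot & c = Lstar].

Definition distinct3 (a b c : label) : Prop := [/\ a <> b, b <> c & a <> c].

Section Defs.
Variable F : fieldType.

Definition qcomm (n : nat) (q : F) (X Y : 'M[F]_n) : 'M[F]_n :=
  q *: (X *m Y) - q^-1 *: (Y *m X).

(* theta^l evaluated at exponent e : b q^e + c q^{-e};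
   theta^l_M = thetaE (2M), theta^l_s = thetaE (2s) = thetaE N where N = 2s *)
Definition thetaE (q bl cl : F) (e : int) : F := bl * q ^ e + cl * q ^ (- e).
Definition theta (q bl cl : F) (M : nat) : F := thetaE q bl cl (2 * M%:Z).

Definition omega (q r0 : F) (N : nat) (ba ca bb cb bc cc : F) : F :=
  - (q - q^-1) ^+ 2 *
   (thetaE q ba ca N%:Z * thetaE q bb cb N%:Z
    - r0^-1 * (q ^ (N%:Z + 1) + q ^ (- (N%:Z + 1))) * thetaE q bc cc N%:Z).

(* Coefficients A^{(b,a)} for a cyclic triple (a,b,c), N = 2s;
   arguments ordered (b^a, c^a, b^b, c^b, b^c, c^c). *)
(* lowc M = A^{(b,a)}_{M,M-1}  (0 unless 1 <= M <= N) *)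
Definition lowc (q r0 : F) (N : nat) (ba ca bb cb bc cc : F) (M : nat) : F :=
  if (1 <= M <= N)%N then
    let m := M%:Z in let n := N%:Z in
    q ^ (2 - 2 * n) * (1 - q ^ (2 * m)) * (ca - ba * q ^ (2 * m + 2 * n))
    * (bb * bc * r0 * q ^ (2 * n - 1) + ba * q ^ (2 * m - 2))
    * (ca * cc * r0 * q ^ (-1) + cb * q ^ (2 * m - 2))
    / ((ca - ba * q ^ (4 * m - 2)) * (ca - ba * q ^ (4 * m)))
  else 0.

(* upc M = A^{(b,a)}_{M-1,M}  (0 unless 1 <= M <= N) *)
Definition upc (q r0 : F) (N : nat) (ba ca bb cb bc cc : F) (M : nat) : F :=
  if (1 <= M <= N)%N then
    let m := M%:Z in let n := N%:Z in
    (1 - q ^ (2 * m - 2 * n - 2)) * (ca - ba * q ^ (2 * m - 2))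
    * (ca + bb * bc * r0 * q ^ (2 * m + 2 * n - 1))
    * (cb + ba * cc * r0 * q ^ (2 * m - 1))
    / ((ca - ba * q ^ (4 * m - 4)) * (ca - ba * q ^ (4 * m - 2)))
  else 0.

Definition diagc (q r0 : F) (N : nat) (ba ca bb cb bc cc : F) (M : nat) : F :=
  theta q bb cb 0 - upc q r0 N ba ca bb cb bc cc M.+1
  - lowc q r0 N ba ca bb cb bc cc M.

Definition tri_act (n : nat) (X P : 'M[F]_n) (M : 'I_n) (lo di up : F) : Prop :=
  X *m col M P =
  \sum_(i < n) (if (i == M.+1 :> nat) then lo
                else if (i == M :> nat) then di
                else if (i.+1 == M :> nat) then up else 0) *: col i P.

Definition irred_tridiag (n : nat) (T : 'M[F]_n) : Prop :=
  (forall i j : 'I_n, (i.+1 < j)%N \/ (j.+1 < i)%N -> T i j = 0) /\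
  (forall i j : 'I_n, (i.+1 == j :> nat) || (j.+1 == i :> nat) -> T i j != 0).

Definition leonard_pair (n : nat) (A B : 'M[F]_n) (thA thB : nat -> F) : Prop :=
  (exists P T : 'M[F]_n, [/\ P \in unitmx,
      A *m P = P *m diag_mx (\row_(i < n) thA i), B *m P = P *m T
      & irred_tridiag T]) /\
  (exists P T : 'M[F]_n, [/\ P \in unitmx,
      B *m P = P *m diag_mx (\row_(i < n) thB i), A *m P = P *m T
      & irred_tridiag T]).


Definition Aop (N : nat) (q r0 : F) (bp cp : label -> F) (A As : 'M[F]_N.+1)
    (l : label) : 'M[F]_N.+1 :=
  match l with
  | Ldot => A
  | Lstar => As
  | Ldia => (r0 / (q ^+ 2 - q^-2)) *: qcomm q As A
      + (r0 * omega q r0 N (bp Ldot) (cp Ldot) (bp Lstar) (cp Lstar) (bp Ldia) (cp Ldia)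
         / ((q - q^-1) * (q ^+ 2 - q^-2))) *: 1%:M
  end.
Arguments Aop : clear implicits.

Definition omegaL (N : nat) (q r0 : F) (bp cp : label -> F) (x y z : label) : F :=
  omega q r0 N (bp x) (cp x) (bp y) (cp y) (bp z) (cp z).

Definition AW (N : nat) (q r0 : F) (bp cp : label -> F) (A As : 'M[F]_N.+1) : Prop :=
  forall x y z : label, distinct3 x y z ->
    let Ax := Aop N q r0 bp cp A As x in
    let Ay := Aop N q r0 bp cp A As y in
    qcomm q^-1 Ax (qcomm q Ax Ay) =
      - ((q ^+ 2 - q^-2) ^+ 2 / r0 ^+ 2) *: Ay + omegaL N q r0 bp cp x y z *: Ax
      + ((q + q^-1) / r0 * omegaL N q r0 bp cp x z y) *: 1%:M.

Definition thetaL (q : F) (bp cp : label -> F) (l : label) (M : nat) : F :=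
  theta q (bp l) (cp l) M.

Definition attached (N : nat) (q r0 : F) (bp cp : label -> F) (A As : 'M[F]_N.+1)
    (a b c : label) (Pa Pb : 'M[F]_N.+1) : Prop :=
  let Aa := Aop N q r0 bp cp A As a in
  let Ab := Aop N q r0 bp cp A As b in
  let lo_ba := lowc q r0 N (bp a) (cp a) (bp b) (cp b) (bp c) (cp c) in
  let di_ba := diagc q r0 N (bp a) (cp a) (bp b) (cp b) (bp c) (cp c) in
  let up_ba := upc q r0 N (bp a) (cp a) (bp b) (cp b) (bp c) (cp c) in
  (* A^{(a,b)}: b^a <-> b^b, c^a <-> c^b, b^c |-> q^{-4s} c^c, c^c |-> q^{4s} b^c *)
  let bc' := q ^ (- (2 * N%:Z)) * cp c in
  let cc' := q ^ (2 * N%:Z) * bp c in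
  let lo_ab := lowc q r0 N (bp b) (cp b) (bp a) (cp a) bc' cc' in
  let di_ab := diagc q r0 N (bp b) (cp b) (bp a) (cp a) bc' cc' in
  let up_ab := upc q r0 N (bp b) (cp b) (bp a) (cp a) bc' cc' in
  [/\ Pa \in unitmx /\ Pb \in unitmx,
      forall M : 'I_N.+1, Aa *m col M Pa = thetaL q bp cp a M *: col M Pa,
      forall M : 'I_N.+1, tri_act Ab Pa M (lo_ba M.+1) (di_ba M) (up_ba M),
      forall M : 'I_N.+1, Ab *m col M Pb = thetaL q bp cp b M *: col M Pb
    & forall M : 'I_N.+1, tri_act Aa Pb M (lo_ab M.+1) (di_ab M) (up_ab M)].

Definition gfun (q r0 : F) (bp cp : label -> F) (a b c : label) (k : nat) : F :=
  q ^ (4 * k%:Z) * (bp b / cp b) *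
  ((cp b * q ^ (- (2 * k%:Z)) + r0 * q * cp a * bp c)
   / (bp b * q ^ (2 * k%:Z) + r0 * q^-1 * cp a * bp c)).

Arguments AW : clear implicits.
Arguments attached : clear implicits.

End Defs.
Arguments Aop {F}. Arguments AW {F}. Arguments attached {F}.

(* Main.v *)
Require Import Defs.
From HB Require Import structures.
From mathcomp Require Import all_boot all_order all_algebra.
From mathcomp Require Import reals.
From mathcomp Require Import complex.
From mathcomp Require Import ring zify.
Set Implicit Arguments. Unset Strict Implicit. Unset Printing Implicit Defensive.
Import Order.TTheory GRing.Theory Num.Theory.
Local Open Scope ring_scope.

Section Conv.
Variable F : fieldType.
Lemma pz (q : F) (hq : q != 0) (M N : nat) (i j k : int) (e : int) :
  e = i * M%:Z + j * N%:Z + k -> q ^ e = (q^+M) ^ i * (q^+N) ^ j * q ^ k.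
Proof.
move->; rewrite !expfzDr // ?expfz_neq0 //.
rewrite !exprnP !exprz_exp [M%:Z * _]mulrC [N%:Z * _]mulrC.
done.
Qed.

Variables q r0 : F.
Definition upF (ba ca bb cb bc cc X Y : F) :=
  (1 - X^+2/(Y^+2*q^+2)) * (ca - ba*(X^+2/q^+2)) * (ca + bb*bc*r0*(X^+2*Y^+2/q))
  * (cb + ba*cc*r0*(X^+2/q)) / ((ca - ba*(X^+4/q^+4)) * (ca - ba*(X^+4/q^+2))).
Definition lowF (ba ca bb cb bc cc X Y : F) :=
  q^+2 / Y^+2 * (1 - X^+2) * (ca - ba * (X^+2 * Y^+2))
  * (bb*bc*r0*(Y^+2/q) + ba*(X^+2/q^+2)) * (ca*cc*r0*q^-1 + cb*(X^+2/q^+2))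
  / ((ca - ba*(X^+4/q^+2)) * (ca - ba*X^+4)).
Ltac nzs := repeat (apply/andP; split); rewrite ?expf_neq0 ?oner_eq0 //.
Ltac pze h M N i j k := rewrite (@pz _ h M N i j k); [rewrite /exprz /=; field; nzs | ring].
Lemma lowcE (hq : q != 0) N ba ca bb cb bc cc M : (1 <= M <= N)%N ->
  lowc q r0 N ba ca bb cb bc cc M = lowF ba ca bb cb bc cc (q^+M) (q^+N).
Proof.
move=> hM; rewrite /lowc hM /lowF.
have -> : q ^ (2 - 2 * N%:Z) = q^+2 / (q^+N)^+2 by pze hq M N (0:int) (-2:int) (2:int).
have -> : q ^ (2 * M%:Z) = (q^+M)^+2 by pze hq M N (2:int) (0:int) (0:int).
have -> : q ^ (2 * M%:Z + 2 * N%:Z) = (q^+M)^+2 * (q^+N)^+2 by pze hq M N (2:int) (2:int) (0:int).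
have -> : q ^ (2 * N%:Z - 1) = (q^+N)^+2 / q by pze hq M N (0:int) (2:int) (-1:int).
have -> : q ^ (2 * M%:Z - 2) = (q^+M)^+2 / q^+2 by pze hq M N (2:int) (0:int) (-2:int).
have -> : q ^ (4 * M%:Z - 2) = (q^+M)^+4 / q^+2 by pze hq M N (4:int) (0:int) (-2:int).
have -> : q ^ (4 * M%:Z) = (q^+M)^+4 by pze hq M N (4:int) (0:int) (0:int).
done.
Qed.
Lemma upcE (hq : q != 0) N ba ca bb cb bc cc M : (1 <= M <= N)%N ->
  upc q r0 N ba ca bb cb bc cc M = upF ba ca bb cb bc cc (q^+M) (q^+N).
Proof.
move=> hM; rewrite /upc hM /upF.
have -> : q ^ (2 * M%:Z - 2 * N%:Z - 2) = (q^+M)^+2 / ((q^+N)^+2 * q^+2) by pze hq M N (2:int) (-2:int) (-2:int).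
have -> : q ^ (2 * M%:Z - 2) = (q^+M)^+2 / q^+2 by pze hq M N (2:int) (0:int) (-2:int).
have -> : q ^ (2 * M%:Z + 2 * N%:Z - 1) = (q^+M)^+2 * (q^+N)^+2 / q by pze hq M N (2:int) (2:int) (-1:int).
have -> : q ^ (2 * M%:Z - 1) = (q^+M)^+2 / q by pze hq M N (2:int) (0:int) (-1:int).
have -> : q ^ (4 * M%:Z - 4) = (q^+M)^+4 / q^+4 by pze hq M N (4:int) (0:int) (-4:int).
have -> : q ^ (4 * M%:Z - 2) = (q^+M)^+4 / q^+2 by pze hq M N (4:int) (0:int) (-2:int).
done.
Qed.
Definition thF (b c X : F) := b * X^+2 + c * (X^+2)^-1.
Definition gF (ca bb cb bc X : F) :=
  X^+4 * (bb / cb) * ((cb * (X^+2)^-1 + r0 * q * ca * bc) / (bb * X^+2 + r0 * q^-1 * ca * bc)).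
Definition omF (ba ca bb cb bc cc Y : F) :=
  - (q - q^-1) ^+ 2 * ((ba * Y + ca * Y^-1) * (bb * Y + cb * Y^-1)
    - r0^-1 * (Y * q + (Y * q)^-1) * (bc * Y + cc * Y^-1)).

Lemma thetaE' (hq : q != 0) b c M : theta q b c M = thF b c (q^+M).
Proof.
rewrite /theta /thetaE /thF.
have -> : q ^ (2 * M%:Z) = (q^+M)^+2 by pze hq M 0%N (2:int) (0:int) (0:int).
have -> : q ^ (- (2 * M%:Z)) = ((q^+M)^+2)^-1 by pze hq M 0%N (-2:int) (0:int) (0:int).
done.
Qed.
Lemma th0E b c : theta q b c 0 = b + c.
Proof. by rewrite /theta /thetaE mulr0 oppr0 expr0z !mulr1. Qed.
Lemma omegaE (hq : q != 0) N ba ca bb cb bc cc :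
  omega q r0 N ba ca bb cb bc cc = omF ba ca bb cb bc cc (q^+N).
Proof.
rewrite /omega /thetaE /omF.
have -> : q ^ N%:Z = q^+N by [].
have -> : q ^ (- N%:Z) = (q^+N)^-1 by pze hq 0%N N (0:int) (-1:int) (0:int).
have -> : q ^ (N%:Z + 1) = q^+N * q by pze hq 0%N N (0:int) (1:int) (1:int).
have -> : q ^ (- (N%:Z + 1)) = (q^+N * q)^-1 by pze hq 0%N N (0:int) (-1:int) (-1:int).
done.
Qed.
Lemma gE (hq : q != 0) M ca bb cb bc :
  q ^ (4 * M%:Z) * (bb / cb) * ((cb * q ^ (- (2 * M%:Z)) + r0 * q * ca * bc)
     / (bb * q ^ (2 * M%:Z) + r0 * q^-1 * ca * bc)) = gF ca bb cb bc (q^+M).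
Proof.
rewrite /gF.
have -> : q ^ (4 * M%:Z) = (q^+M)^+4 by pze hq M 0%N (4:int) (0:int) (0:int).
have -> : q ^ (2 * M%:Z) = (q^+M)^+2 by pze hq M 0%N (2:int) (0:int) (0:int).
have -> : q ^ (- (2 * M%:Z)) = ((q^+M)^+2)^-1 by pze hq M 0%N (-2:int) (0:int) (0:int).
done.
Qed.
Lemma bcE (hq : q != 0) N cc : q ^ (- (2 * N%:Z)) * cc = cc / (q^+N)^+2.
Proof.
have -> : q ^ (- (2 * N%:Z)) = ((q^+N)^+2)^-1 by pze hq 0%N N (0:int) (-2:int) (0:int).
by rewrite mulrC.
Qed.
Lemma ccE (hq : q != 0) N bc : q ^ (2 * N%:Z) * bc = (q^+N)^+2 * bc.
Proof.
by have -> : q ^ (2 * N%:Z) = (q^+N)^+2 by pze hq 0%N N (0:int) (2:int) (0:int).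
Qed.

Lemma lowF_den ba ca bb cb bc cc X Y : lowF ba ca bb cb bc cc X Y != 0 ->
  [/\ ca - ba*(X^+4/q^+2) != 0, ca - ba*X^+4 != 0 & bb*bc*r0*(Y^+2/q) + ba*(X^+2/q^+2) != 0].
Proof.
move=> h; split; apply: contra h => /eqP e; rewrite /lowF e ?(mul0r, mulr0, invr0) //.
Qed.
Lemma upF_den ba ca bb cb bc cc X Y : upF ba ca bb cb bc cc X Y != 0 ->
  [/\ ca - ba*(X^+4/q^+4) != 0, ca - ba*(X^+4/q^+2) != 0 & cb + ba*cc*r0*(X^+2/q) != 0].
Proof.
move=> h; split; apply: contra h => /eqP e; rewrite /upF e ?(mul0r, mulr0, invr0) //.
Qed.
Lemma nz_scale (x y u : F) : u != 0 -> x = u * y -> x != 0 -> y != 0.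
Proof. by move=> hu ->; rewrite mulf_eq0 negb_or => /andP []. Qed.
End Conv.

Section Cases.
Variable F : fieldType.
Variables (q r0 : F).
Hypotheses (hq : q != 0) (hq2 : q^+2 - 1 != 0) (hq4 : q^+4 - 1 != 0) (hr : r0 != 0).

Ltac nzsideC := repeat (apply/andP; split); try (by rewrite ?oner_eq0);
  match goal with h : is_true (?E' != 0) |- is_true (?E != 0) =>
     (have -> : E = E' by ring); exact h end.

Ltac nz := rewrite ?(mulf_eq0, invr_eq0, expf_eq0, negb_or, negb_and) /=;
  repeat (apply/andP; split); try done.

Lemma ceq (b c : F) : b != 0 -> r0^-2 = b * c -> c = r0^-2 / b.
Proof. by move=> hb ->; field. Qed.

Lemma caseLo N M (bp cp : label -> F) (a b c : label) :
  (forall l, bp l != 0) -> (forall l, r0 ^- 2 = bp l * cp l) -> (M < N)%N ->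
  lowc q r0 N (bp b) (cp b) (bp a) (cp a) (q ^ (- (2 * N%:Z)) * cp c) (q ^ (2 * N%:Z) * bp c) M.+1 != 0 ->
  upc q r0 N (bp a) (cp a) (bp b) (cp b) (bp c) (cp c) M.+1 != 0 ->
  r0 / (q ^+ 2 - q^-2) *
   (q * thetaL q bp cp b M.+1 *
      lowc q r0 N (bp b) (cp b) (bp a) (cp a) (q ^ (- (2 * N%:Z)) * cp c) (q ^ (2 * N%:Z) * bp c) M.+1
    - q^-1 * thetaL q bp cp b M *
      lowc q r0 N (bp b) (cp b) (bp a) (cp a) (q ^ (- (2 * N%:Z)) * cp c) (q ^ (2 * N%:Z) * bp c) M.+1)
  = lowc q r0 N (bp b) (cp b) (bp c) (cp c) (bp a) (cp a) M.+1 * gfun q r0 bp cp a b c M.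
Proof.
move=> hbn hbc hMN hL hU.
have hM1 : (1 <= M.+1 <= N)%N by [].
rewrite /thetaL /gfun !lowcE // !thetaE' // gE // bcE // ccE //.
rewrite lowcE // bcE // ccE // in hL; rewrite upcE // in hU.
case/lowF_den: hL => d1 d2 _; case/upF_den: hU => _ _ d3.
move: d1 d2 d3; rewrite [q ^+ M.+1]exprS.
have hX : q ^+ M != 0 by rewrite expf_neq0.
have hY : q ^+ N != 0 by rewrite expf_neq0.
move: (q ^+ M) (q ^+ N) hX hY => X Y hX hY.
rewrite (ceq (hbn a) (hbc a)) (ceq (hbn b) (hbc b)) (ceq (hbn c) (hbc c)).
move: (hbn a) (hbn b) (hbn c); move: (bp a) (bp b) (bp c) => ba bb bc ha hb hc d1 d2 d3.
have c1 : 1 - r0^+2 * bb^+2 * (q^+2 * X^+4) != 0.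
  by apply: (nz_scale (u:=r0^-2/bb) _ _ d1); [nz | field; nzsideC].
have c2 : 1 - r0^+2 * bb^+2 * (q^+4 * X^+4) != 0.
  by apply: (nz_scale (u:=r0^-2/bb) _ _ d2); [nz | field; nzsideC].
have c3 : r0 * ba * bb * q * X^+2 + bc != 0.
  by apply: (nz_scale (u:=r0^-2/(bb * bc)) _ _ d3); [nz | field; nzsideC].
rewrite /lowF /thF /gF.
field; nzsideC.
Qed.

Lemma caseUp N i (bp cp : label -> F) (a b c : label) :
  (forall l, bp l != 0) -> (forall l, r0 ^- 2 = bp l * cp l) -> (i < N)%N ->
  upc q r0 N (bp b) (cp b) (bp a) (cp a) (q ^ (- (2 * N%:Z)) * cp c) (q ^ (2 * N%:Z) * bp c) i.+1 != 0 ->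
  upc q r0 N (bp a) (cp a) (bp b) (cp b) (bp c) (cp c) i.+1 != 0 ->
  lowc q r0 N (bp a) (cp a) (bp b) (cp b) (bp c) (cp c) (N - i) != 0 ->
  r0 / (q ^+ 2 - q^-2) *
   (q * thetaL q bp cp b i *
      upc q r0 N (bp b) (cp b) (bp a) (cp a) (q ^ (- (2 * N%:Z)) * cp c) (q ^ (2 * N%:Z) * bp c) i.+1
    - q^-1 * thetaL q bp cp b i.+1 *
      upc q r0 N (bp b) (cp b) (bp a) (cp a) (q ^ (- (2 * N%:Z)) * cp c) (q ^ (2 * N%:Z) * bp c) i.+1)
  = upc q r0 N (bp b) (cp b) (bp c) (cp c) (bp a) (cp a) i.+1 / gfun q r0 bp cp a b c i.
Proof.
move=> hbn hbc hiN hU hV hL.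
have hM1 : (1 <= i.+1 <= N)%N by [].
have hM2 : (1 <= N - i <= N)%N by rewrite subn_gt0 hiN leq_subr.
rewrite /thetaL /gfun !upcE // !thetaE' // gE // bcE // ccE //.
rewrite upcE // bcE // ccE // in hU; rewrite upcE // in hV; rewrite lowcE // in hL.
case/upF_den: hU => d1 d2 _; case/upF_den: hV => _ _ d3; case/lowF_den: hL => _ _ d4.
have eY : q^+N = q^+(N - i) * q^+i by rewrite -exprD subnK // ltnW.
move: d4; rewrite [in X in X -> _]eY => d4.
move: d1 d2 d3 d4; rewrite [q ^+ i.+1]exprS.
have hX : q ^+ i != 0 by rewrite expf_neq0.
have hY : q ^+ N != 0 by rewrite expf_neq0.
have hZ : q ^+ (N - i) != 0 by rewrite expf_neq0.
move: (q ^+ i) (q ^+ N) (q ^+ (N - i)) hX hY hZ => X Y Z hX hY hZ.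
rewrite (ceq (hbn a) (hbc a)) (ceq (hbn b) (hbc b)) (ceq (hbn c) (hbc c)).
move: (hbn a) (hbn b) (hbn c); move: (bp a) (bp b) (bp c) => ba bb bc ha hb hc d1 d2 d3 d4.
have c1 : 1 - r0^+2 * bb^+2 * X^+4 != 0.
  by apply: (nz_scale (u:=r0^-2/bb) _ _ d1); [nz | field; nzsideC].
have c2 : 1 - r0^+2 * bb^+2 * (q^+2 * X^+4) != 0.
  by apply: (nz_scale (u:=r0^-2/bb) _ _ d2); [nz | field; nzsideC].
have c3 : r0 * ba * bb * q * X^+2 + bc != 0.
  by apply: (nz_scale (u:=r0^-2/(bb * bc)) _ _ d3); [nz | field; nzsideC].
have c4 : ba + r0 * q * bb * bc * X^+2 != 0.
  by apply: (nz_scale (u:=Z^+2/q^+2) _ _ d4); [nz | field; nzsideC].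
rewrite /upF /thF /gF.
field; nzsideC.
Qed.

Lemma caseDi N M (bp cp : label -> F) (a b c : label) :
  (forall l, bp l != 0) -> (forall l, r0 ^- 2 = bp l * cp l) -> (M <= N)%N ->
  ((M < N)%N -> upc q r0 N (bp b) (cp b) (bp a) (cp a) (q ^ (- (2 * N%:Z)) * cp c) (q ^ (2 * N%:Z) * bp c) M.+1 != 0) ->
  ((0 < M)%N -> lowc q r0 N (bp b) (cp b) (bp a) (cp a) (q ^ (- (2 * N%:Z)) * cp c) (q ^ (2 * N%:Z) * bp c) M != 0) ->
  r0 / (q ^+ 2 - q^-2) *
   (q * thetaL q bp cp b M *
      diagc q r0 N (bp b) (cp b) (bp a) (cp a) (q ^ (- (2 * N%:Z)) * cp c) (q ^ (2 * N%:Z) * bp c) M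
    - q^-1 * thetaL q bp cp b M *
      diagc q r0 N (bp b) (cp b) (bp a) (cp a) (q ^ (- (2 * N%:Z)) * cp c) (q ^ (2 * N%:Z) * bp c) M)
  + r0 * omegaL N q r0 bp cp a b c / ((q - q^-1) * (q ^+ 2 - q^-2))
  = diagc q r0 N (bp b) (cp b) (bp c) (cp c) (bp a) (cp a) M.
Proof.
move=> hbn hbc hMN hU hL.
rewrite /diagc !th0E /thetaL /omegaL omegaE // !thetaE' //.
have hY : q ^+ N != 0 by rewrite expf_neq0.
case: (posnP M) => [M0|Mpos]; case: (ltngtP M N) hMN => // [MN|MN] _.
- (* M = 0 < N *)
  subst M.
  have hM1 : (1 <= 1 <= N)%N by rewrite MN.
  have hu := hU MN; rewrite upcE // bcE // ccE // in hu; case/upF_den: hu => d1 d2 _.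
  move: d1 d2; rewrite !upcE // !bcE // !ccE // /lowc /= !expr1 expr0 !subr0.
  move: (q ^+ N) hY => Y hY.
  rewrite (ceq (hbn a) (hbc a)) (ceq (hbn b) (hbc b)) (ceq (hbn c) (hbc c)).
  move: (hbn a) (hbn b) (hbn c); move: (bp a) (bp b) (bp c) => ba bb bc ha hb hc d1 d2.
  have c1 : 1 - r0^+2 * bb^+2 != 0.
    by apply: (nz_scale (u:=r0^-2/bb) _ _ d1); [nz | field; nzsideC].
  have c2 : 1 - r0^+2 * bb^+2 * q^+2 != 0.
    by apply: (nz_scale (u:=r0^-2/bb) _ _ d2); [nz | field; nzsideC].
  rewrite /upF /thF /omF.
  field; nzsideC.
- (* M = 0 = N *)
  rewrite -MN in M0 *; rewrite M0 /lowc /upc /= expr0 !subr0.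
  rewrite (ceq (hbn a) (hbc a)) (ceq (hbn b) (hbc b)) (ceq (hbn c) (hbc c)).
  move: (hbn a) (hbn b) (hbn c); move: (bp a) (bp b) (bp c) => ba bb bc ha hb hc.
  rewrite /thF /omF.
  field; nzsideC.
- (* 0 < M < N *)
  have hM1 : (1 <= M.+1 <= N)%N by [].
  have hM2 : (1 <= M <= N)%N by rewrite Mpos ltnW.
  have hu := hU MN; rewrite upcE // bcE // ccE // in hu; case/upF_den: hu => d1 d2 _.
  have hl := hL Mpos; rewrite lowcE // bcE // ccE // in hl; case/lowF_den: hl => e1 e2 _.
  move: d1 d2 e1 e2; rewrite !upcE // !lowcE // !bcE // !ccE // [q ^+ M.+1]exprS.
  have hX : q ^+ M != 0 by rewrite expf_neq0.
  move: (q ^+ M) (q ^+ N) hX hY => X Y hX hY.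
  rewrite (ceq (hbn a) (hbc a)) (ceq (hbn b) (hbc b)) (ceq (hbn c) (hbc c)).
  move: (hbn a) (hbn b) (hbn c); move: (bp a) (bp b) (bp c) => ba bb bc ha hb hc d1 d2 e1 e2.
  have c1 : 1 - r0^+2 * bb^+2 * X^+4 != 0.
    by apply: (nz_scale (u:=r0^-2/bb) _ _ d1); [nz | field; nzsideC].
  have c2 : 1 - r0^+2 * bb^+2 * (q^+2 * X^+4) != 0.
    by apply: (nz_scale (u:=r0^-2/bb) _ _ d2); [nz | field; nzsideC].
  have c3 : q^+2 - r0^+2 * bb^+2 * X^+4 != 0.
    by apply: (nz_scale (u:=r0^-2/(bb * q^+2)) _ _ e1); [nz | field; nzsideC].
  rewrite /upF /lowF /thF /omF.
  field; nzsideC.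
- (* 0 < M = N *)
  subst M.
  have hM2 : (1 <= N <= N)%N by rewrite Mpos leqnn.
  have hl := hL Mpos; rewrite lowcE // bcE // ccE // in hl; case/lowF_den: hl => e1 e2 _.
  move: e1 e2; rewrite /upc ltnn andbF !lowcE // !bcE // !ccE // !subr0.
  move: (q ^+ N) hY => Y hY.
  rewrite (ceq (hbn a) (hbc a)) (ceq (hbn b) (hbc b)) (ceq (hbn c) (hbc c)).
  move: (hbn a) (hbn b) (hbn c); move: (bp a) (bp b) (bp c) => ba bb bc ha hb hc e1 e2.
  have c2 : 1 - r0^+2 * bb^+2 * Y^+4 != 0.
    by apply: (nz_scale (u:=r0^-2/bb) _ _ e2); [nz | field; nzsideC].
  have c3 : q^+2 - r0^+2 * bb^+2 * Y^+4 != 0.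
    by apply: (nz_scale (u:=r0^-2/(bb * q^+2)) _ _ e1); [nz | field; nzsideC].
  rewrite /lowF /thF /omF.
  field; nzsideC.
Qed.
End Cases.
Section Act.
Variable F : fieldType.

Lemma act n (q : F) (Aa Ab : 'M[F]_n) (v : 'I_n -> 'cV[F]_n) (M : 'I_n) (ch th : 'I_n -> F) (k0 kap : F) :
  Aa *m v M = \sum_i ch i *: v i -> (forall i, Ab *m v i = th i *: v i) ->
  (k0 *: qcomm q Ab Aa + kap *: 1%:M) *m v M
   = \sum_i (k0 * (q * th i * ch i - q^-1 * th M * ch i) + kap * (i == M)%:R) *: v i.
Proof.
move=> hA hB.
rewrite mulmxDl -!scalemxAl mul1mx /qcomm mulmxBl -!scalemxAl -!mulmxA hA hB -scalemxAr hA.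
rewrite mulmx_sumr.
have -> : \sum_i Ab *m (ch i *: v i) = \sum_i (ch i * th i) *: v i.
  by apply: eq_bigr => i _; rewrite -scalemxAr hB scalerA.
have -> : kap *: v M = \sum_i (kap * (i == M)%:R) *: v i.
  rewrite (bigD1 M) //= eqxx mulr1 big1 ?addr0 // => i /negPf ->.
  by rewrite mulr0 scale0r.
rewrite !scaler_sumr -sumrB scaler_sumr -big_split /=.
apply: eq_bigr => i _.
by rewrite !scalerA -scalerBl scalerA -scalerDl; congr (_ *: _); ring.
Qed.

Lemma sumcol n (P : 'M[F]_n) (c : 'I_n -> F) :
  \sum_i c i *: col i P = P *m \col_i c i.
Proof.
apply/matrixP => r s; rewrite !mxE summxE; apply: eq_bigr => i _.
by rewrite !mxE mulrC.
Qed.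

Lemma coord_uniq n (Q : 'M[F]_n) (c d : 'I_n -> F) : Q \in unitmx ->
  \sum_i c i *: col i Q = \sum_i d i *: col i Q -> forall i, c i = d i.
Proof.
move=> hQ; rewrite !sumcol => /(congr1 (mulmx (invmx Q))); rewrite !mulKmx //.
by move/matrixP => h i; have := h i 0; rewrite !mxE.
Qed.

Lemma col_mulmx m n p (A : 'M[F]_(m, n)) (B : 'M[F]_(n, p)) i : col i (A *m B) = A *m col i B.
Proof. by rewrite !colE mulmxA. Qed.

Lemma col_diag n (P : 'M[F]_n) (d : 'I_n -> F) i :
  col i (P *m diag_mx (\row_j d j)) = d i *: col i P.
Proof. by rewrite mul_mx_diag; apply/matrixP => r s; rewrite !mxE mulrC. Qed.

Lemma col_unit_nz n (Q : 'M[F]_n) i : Q \in unitmx -> col i Q != 0.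
Proof.
move=> hQ; apply/eqP => h.
have : invmx Q *m col i Q = delta_mx i 0 by rewrite colE mulKmx.
rewrite h mulmx0 => /matrixP /(_ i 0); rewrite !mxE !eqxx /=.
by move/eqP; rewrite eq_sym oner_eq0.
Qed.

Lemma tri_ker n (T : 'M[F]_n.+1) (lam : F) (v : 'cV[F]_n.+1) :
  irred_tridiag T -> T *m v = lam *: v -> v 0 0 = 0 -> v = 0.
Proof.
move=> [T0 Tnz] hv h0.
suff H : forall k (i : 'I_n.+1), (i <= k)%N -> v i 0 = 0.
  by apply/matrixP => i j; rewrite (ord1 j) mxE (H i) .
elim=> [|k IH] i.
  by rewrite leqn0 => /eqP hi; rewrite (_ : i = 0) //; apply: val_inj.
rewrite leq_eqVlt => /orP [/eqP hi|]; last exact: IH.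
have hk : (k < n.+1)%N by have := ltn_ord i; rewrite hi; apply: ltnW.
pose j : 'I_n.+1 := Ordinal hk.
move/matrixP: (hv) => /(_ j 0); rewrite !mxE (IH j (leqnn _)) mulr0.
rewrite (bigD1 i) //= big1 ?addr0.
  move/eqP; rewrite mulf_eq0 => /orP [|/eqP //].
  by rewrite (negbTE (Tnz j i _)) // hi eqxx.
move=> l hl; case: (leqP l k) => hlk; first by rewrite IH // mulr0.
rewrite T0 ?mul0r //; left => /=.
by rewrite ltn_neqAle hlk andbT eq_sym -hi; move: hl; apply: contra => /eqP/val_inj ->.
Qed.

Lemma eig1 n (X P T : 'M[F]_n.+1) lam (x y : 'cV[F]_n.+1) :
  P \in unitmx -> X *m P = P *m T -> irred_tridiag T ->
  X *m x = lam *: x -> X *m y = lam *: y -> y != 0 -> exists c, x = c *: y.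
Proof.
move=> hP hXP hT hx hy y0.
have hT' : forall z : 'cV[F]_n.+1, X *m z = lam *: z -> T *m (invmx P *m z) = lam *: (invmx P *m z).
  move=> z hz; rewrite mulmxA (_ : T = invmx P *m X *m P); last first.
    by rewrite -mulmxA hXP mulKmx.
  by rewrite -!mulmxA mulKVmx // hz scalemxAr.
have y0' : (invmx P *m y) 0 0 != 0.
  apply: contra y0 => /eqP h; have := tri_ker hT (hT' _ hy) h.
  by move/(congr1 (mulmx P)); rewrite mulKVmx // mulmx0 => ->.
set xp := invmx P *m x; set yp := invmx P *m y.
exists (xp 0 0 / yp 0 0).
set c := _ / _.
have hz : T *m (xp - c *: yp) = lam *: (xp - c *: yp).
  by rewrite mulmxBr -scalemxAr hT' // hT' // scalerBr !scalerA mulrC.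
have h00 : (xp - c *: yp) 0 0 = 0.
  have e : forall A B : 'cV[F]_n.+1, (A - c *: B) 0 0 = A 0 0 - c * B 0 0.
    by move=> A B; rewrite !mxE.
  by rewrite e /c divfK // subrr.
have := tri_ker hT hz h00 => /eqP.
rewrite subr_eq0 /xp /yp scalemxAr => /eqP /(congr1 (mulmx P)).
by rewrite !mulKVmx.
Qed.

Lemma coefnz N (X Y P T P' T' Q : 'M[F]_N.+1) (th : nat -> F) (lo di up : nat -> F) :
  P \in unitmx -> X *m P = P *m diag_mx (\row_(i < N.+1) th i) -> Y *m P = P *m T ->
  irred_tridiag T ->
  P' \in unitmx -> X *m P' = P' *m T' -> irred_tridiag T' ->
  Q \in unitmx -> (forall M : 'I_N.+1, X *m col M Q = th M *: col M Q) ->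
  (forall M : 'I_N.+1, tri_act Y Q M (lo M.+1) (di M) (up M)) ->
  forall i, (i < N)%N -> lo i.+1 != 0 /\ up i.+1 != 0.
Proof.
move=> hP hXP hYP [_ Tnz] hP' hXP' hT' hQ hQe hQt i hi.
pose cf (m : 'I_N.+1) := (invmx Q *m col m P) m 0.
have hc : forall m : 'I_N.+1, cf m != 0 /\ col m P = cf m *: col m Q.
  move=> m.
  have hx : X *m col m P = th m *: col m P by rewrite -col_mulmx hXP col_diag.
  have [c hc] := eig1 hP' hXP' hT' hx (hQe m) (col_unit_nz m hQ).
  have ec : cf m = c.
    rewrite /cf hc -scalemxAr colE mulKmx // !mxE !eqxx /=.
    by rewrite mulr1.
  rewrite ec; split => //; apply/eqP => c0; move: (col_unit_nz m hP).
  by rewrite hc c0 scale0r eqxx.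
have rel : forall m j : 'I_N.+1, T j m * cf j =
    cf m * (if (j == m.+1 :> nat) then lo m.+1 else if (j == m :> nat) then di m
            else if (j.+1 == m :> nat) then up m else 0).
  move=> m; apply: coord_uniq hQ _.
  have e1 : Y *m col m P = \sum_j (T j m * cf j) *: col j Q.
    rewrite -col_mulmx hYP col_mulmx.
    have -> : col m T = \col_j T j m by apply/colP => j; rewrite !mxE.
    rewrite -sumcol; apply: eq_bigr => j _.
    by rewrite (proj2 (hc j)) scalerA.
  rewrite -e1 (proj2 (hc m)) -scalemxAr (hQt m) scaler_sumr.
  by apply: eq_bigr => j _; rewrite scalerA.
have hi1 : (i < N.+1)%N by apply: ltnW.
have hi2 : (i.+1 < N.+1)%N by [].
pose m : 'I_N.+1 := Ordinal hi1.
pose j : 'I_N.+1 := Ordinal hi2.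
have hm := proj1 (hc m); have hj := proj1 (hc j).
have tz1 : T j m != 0 by apply: Tnz; rewrite /= eqxx orbT.
have tz2 : T m j != 0 by apply: Tnz; rewrite /= eqxx.
split.
  have := rel m j; rewrite /= eqxx => e.
  apply/eqP => l0; move/eqP: e; rewrite l0 mulr0 mulf_eq0 (negbTE hj) orbF.
  by rewrite (negbTE tz1).
have := rel j m; rewrite /= eqxx (ltn_eqF (ltnSn i)) (ltn_eqF (leqW (ltnSn i))) => e.
apply/eqP => l0; move/eqP: e; rewrite l0 mulr0 mulf_eq0 (negbTE hm) orbF.
by rewrite (negbTE tz2).
Qed.
End Act.

Section AcS.
Variable F : fieldType.

Ltac nzside := repeat (apply/andP; split); try (by rewrite ?oner_eq0);
  match goal with h : is_true (?E' != 0) |- is_true (?E != 0) =>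
     (have -> : E = E' by ring); exact h end.
Ltac nzsA := repeat (apply/andP; split); rewrite ?expf_neq0 ?oner_eq0 //.

Lemma omega_sym (q r0 : F) N ba ca bb cb bc cc :
  omega q r0 N ba ca bb cb bc cc = omega q r0 N bb cb ba ca bc cc.
Proof. by rewrite /omega [thetaE q ba ca _ * _]mulrC. Qed.

Section Q.
Variable n : nat.
Implicit Types X Y C : 'M[F]_n.
Lemma qq (q : F) X Y : q != 0 -> qcomm q X (qcomm q Y X) = - qcomm q^-1 X (qcomm q X Y).
Proof.
move=> hq; rewrite /qcomm invrK !mulmxBr !mulmxBl -!scalemxAl -!scalemxAr !mulmxA.
by apply/matrixP => i j; rewrite !mxE; field.
Qed.
Lemma qswap (q : F) X Y : q != 0 -> qcomm q X Y = - qcomm q^-1 Y X.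
Proof.
move=> hq; rewrite /qcomm invrK.
by apply/matrixP => i j; rewrite !mxE; ring.
Qed.
Lemma qcommL (q k m : F) C Y :
  qcomm q (k *: C + m *: 1%:M) Y = k *: qcomm q C Y + (m * (q - q^-1)) *: Y.
Proof.
rewrite /qcomm !mulmxDl !mulmxDr -!scalemxAl -!scalemxAr mul1mx mulmx1.
by apply/matrixP => i j; rewrite !mxE; ring.
Qed.
Lemma qcommR (q k m : F) C X :
  qcomm q X (k *: C + m *: 1%:M) = k *: qcomm q X C + (m * (q - q^-1)) *: X.
Proof.
rewrite /qcomm !mulmxDl !mulmxDr -!scalemxAl -!scalemxAr mul1mx mulmx1.
by apply/matrixP => i j; rewrite !mxE; ring.
Qed.
End Q.

Lemma Ac_formula N (q r0 : F) bp cp (A As : 'M[F]_N.+1) a b c :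
  q != 0 -> q^+2 - 1 != 0 -> q^+4 - 1 != 0 -> r0 != 0 ->
  AW N q r0 bp cp A As -> cyclic a b c ->
  Aop N q r0 bp cp A As c =
   (r0 / (q ^+ 2 - q^-2)) *: qcomm q (Aop N q r0 bp cp A As b) (Aop N q r0 bp cp A As a)
   + (r0 * omegaL N q r0 bp cp a b c / ((q - q^-1) * (q ^+ 2 - q^-2))) *: 1%:M.
Proof.
move=> hq hq2 hq4 hr HAW; rewrite /cyclic; move=> [[-> -> ->]|[[-> -> ->]|[-> -> ->]]] //=.
- have HW := HAW Lstar Ldot Ldia; rewrite /= in HW.
  have H1 := HW (ltac:(by split)).
  rewrite qcommL (qswap _ _ hq) H1 /omegaL omega_sym.
  apply/matrixP => i j; rewrite !mxE. by field; nzside.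
- have HW := HAW Ldot Lstar Ldia; rewrite /= in HW.
  have H1 := HW (ltac:(by split)).
  rewrite qcommR (qq _ _ hq) H1 /omegaL [omega _ _ _ (bp Ldia) _ _ _ _ _]omega_sym.
  apply/matrixP => i j; rewrite !mxE. by field; nzside.
Qed.
End AcS.

Unset Implicit Arguments.

Theorem lemma3p4 (R : realType) (N : nat) (q r0 : R[i]) (bp cp : label -> R[i])
    (A As : 'M[R[i]]_N.+1) (a b c : label) (Pa Pb : 'M[R[i]]_N.+1) :
  q != 0 ->
  (forall k : nat, (0 < k)%N -> q ^+ k != 1) ->
  r0 != 0 ->
  (forall l, bp l != 0) -> (forall l, cp l != 0) ->
  (forall l, r0 ^- 2 = bp l * cp l) ->
  AW N q r0 bp cp A As ->
  cyclic a b c ->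
  leonard_pair (Aop N q r0 bp cp A As a) (Aop N q r0 bp cp A As b)
               (thetaL q bp cp a) (thetaL q bp cp b) ->
  leonard_pair (Aop N q r0 bp cp A As b) (Aop N q r0 bp cp A As c)
               (thetaL q bp cp b) (thetaL q bp cp c) ->
  attached N q r0 bp cp A As a b c Pa Pb ->
  forall M : 'I_N.+1,
    tri_act (Aop N q r0 bp cp A As c) Pb M
      (lowc q r0 N (bp b) (cp b) (bp c) (cp c) (bp a) (cp a) M.+1
         * gfun q r0 bp cp a b c M)
      (diagc q r0 N (bp b) (cp b) (bp c) (cp c) (bp a) (cp a) M)
      (upc q r0 N (bp b) (cp b) (bp c) (cp c) (bp a) (cp a) M
         / gfun q r0 bp cp a b c M.-1).
Proof.
move=> hq hq1 hr hbn hcn hbc HAW hcyc [LP1 LP2] _ Hatt M.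
have hq2 : q^+2 - 1 != 0 by rewrite subr_eq0 hq1.
have hq4 : q^+4 - 1 != 0 by rewrite subr_eq0 hq1.
move: Hatt; rewrite /attached /= => -[[hPa hPb] hAa hAbt hAb hAat].
case: LP1 => P1 [T1 [hP1 hAP1 hBP1 hT1]].
case: LP2 => P2 [T2 [hP2 hBP2 hAP2 hT2]].
have nzba := coefnz (lo := lowc q r0 N (bp a) (cp a) (bp b) (cp b) (bp c) (cp c))
  (di := diagc q r0 N (bp a) (cp a) (bp b) (cp b) (bp c) (cp c))
  (up := upc q r0 N (bp a) (cp a) (bp b) (cp b) (bp c) (cp c))
  hP1 hAP1 hBP1 hT1 hP2 hAP2 hT2 hPa hAa hAbt.
have nzab := coefnz
  (lo := lowc q r0 N (bp b) (cp b) (bp a) (cp a) (q ^ (- (2 * N%:Z)) * cp c) (q ^ (2 * N%:Z) * bp c))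
  (di := diagc q r0 N (bp b) (cp b) (bp a) (cp a) (q ^ (- (2 * N%:Z)) * cp c) (q ^ (2 * N%:Z) * bp c))
  (up := upc q r0 N (bp b) (cp b) (bp a) (cp a) (q ^ (- (2 * N%:Z)) * cp c) (q ^ (2 * N%:Z) * bp c))
  hP2 hBP2 hAP2 hT2 hP1 hBP1 hT1 hPb hAb hAat.
rewrite /tri_act (Ac_formula hq hq2 hq4 hr HAW hcyc) (act _ _ _ (hAat M) hAb).
apply: eq_bigr => i _; congr (_ *: _).
have iMo : (i == M) = (i == M :> nat) by [].
rewrite iMo.
have hMN : (M <= N)%N by rewrite -ltnS ltn_ord.
case: (eqVneq (i : nat) M.+1) => [hi|hi].
  have hMN' : (M < N)%N by rewrite -hi -ltnS ltn_ord.
  rewrite hi (gtn_eqF (ltnSn M)) mulr0n mulr0 addr0.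
  apply: caseLo => //.
    exact: (nzab M hMN').1.
  exact: (nzba M hMN').2.
rewrite ?(negbTE hi).
case: (eqVneq (i : nat) M) => [hi'|hi'].
  rewrite hi' mulr1n mulr1.
  apply: caseDi => // [hMN'|hM0].
    exact: (nzab M hMN').2.
  have hM1 : (M.-1 < N)%N by lia.
  by have := (nzab M.-1 hM1).1; rewrite prednK.
rewrite ?(negbTE hi') mulr0n mulr0 addr0.
case: (eqVneq (i.+1) M) => [hi''|hi''].
  rewrite -hi'' /=.
  have hiN : (i < N)%N by rewrite -ltnS hi'' ltn_ord.
  apply: caseUp => //.
  - exact: (nzab i hiN).2.
  - exact: (nzba i hiN).2.
  - have h1 : (N - i.+1 < N)%N by lia.
    have := (nzba _ h1).1; rewrite subnSK //.
by rewrite ?(negbTE hi'') !mulr0 subrr mulr0.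
Qed.
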